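(* Let $F_1,F_2,F_3$ be smooth real functions of one variable and set $w_1=y+\sqrt3x$, $w_2=y-\sqrt3x$, $w_3=-2y$. Suppose that, identically in $(x,y)$, $$F_1'(w_1)\big(F_2(w_2)-F_3(w_3)\big)+F_2'(w_2)\big(F_3(w_3)-F_1(w_1)\big)+F_3'(w_3)\big(F_1(w_1)-F_2(w_2)\big)=0.$$ Then for the potential $V(x,y)=F_1(y+\sqrt3x)+F_2(y-\sqrt3x)+F_3(-2y)$ the function $$J=\dot x^3-3\dot x\dot y^2+3\big[F_1(y+\sqrt3x)+F_2(y-\sqrt3x)-2F_3(-2y)\big]\dot x-3\sqrt3\big[F_1(y+\sqrt3x)-F_2(y-\sqrt3x)\big]\dot y$$ is a first integral of the system $\ddot x=-V_{,x}$, $\ddot y=-V_{,y}$.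
   Context: A first integral is a function of $(t,x,y,\dot x,\dot y)$ whose total time derivative vanishes along every solution of the given equations of motion (on the domain where everything is smooth). *)

(* Defs.v *)
From Stdlib Require Import Reals.
From Coquelicot Require Import Coquelicot.
Open Scope R_scope.

Definition smooth (f : R -> R) : Prop := forall (n : nat) (x : R), ex_derive_n f n x.

Definition Vpot (F1 F2 F3 : R -> R) (x y : R) : R :=
  F1 (y + sqrt 3 * x) + F2 (y - sqrt 3 * x) + F3 (-2 * y).

Definition partial_x (V : R -> R -> R) (x y : R) : R := Derive (fun u => V u y) x.
Definition partial_y (V : R -> R -> R) (x y : R) : R := Derive (fun v => V x v) y.

Definition is_solution (V : R -> R -> R) (a b : R) (x y : R -> R) : Prop :=
  forall t, a < t < b ->
    ex_derive x t /\ ex_derive y t /\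
    ex_derive (Derive x) t /\ ex_derive (Derive y) t /\
    Derive (Derive x) t = - partial_x V (x t) (y t) /\
    Derive (Derive y) t = - partial_y V (x t) (y t).

Definition first_integral (V : R -> R -> R) (I : R -> R -> R -> R -> R -> R) : Prop :=
  forall (a b : R) (x y : R -> R), is_solution V a b x y ->
    forall t, a < t < b ->
      is_derive (fun s => I s (x s) (y s) (Derive x s) (Derive y s)) t 0.

Definition Jint (F1 F2 F3 : R -> R) (x y xd yd : R) : R :=
  xd ^ 3 - 3 * xd * yd ^ 2
  + 3 * (F1 (y + sqrt 3 * x) + F2 (y - sqrt 3 * x) - 2 * F3 (-2 * y)) * xd
  - 3 * sqrt 3 * (F1 (y + sqrt 3 * x) - F2 (y - sqrt 3 * x)) * yd.

(* Main.v *)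
Require Import Defs.
From Stdlib Require Import Reals Lra.
From Coquelicot Require Import Coquelicot.
Open Scope R_scope.

Lemma sm1 f : smooth f -> forall x, ex_derive f x.
Proof. intros h x. exact (h 1%nat x). Qed.

Lemma px F1 F2 F3 : smooth F1 -> smooth F2 -> smooth F3 -> forall x y,
  partial_x (Vpot F1 F2 F3) x y = sqrt 3 * Derive F1 (y + sqrt 3 * x) - sqrt 3 * Derive F2 (y - sqrt 3 * x).
Proof.
intros h1 h2 h3 x y. unfold partial_x, Vpot.
apply is_derive_unique. auto_derive.
- repeat split; apply sm1; auto.
- unfold Rminus. change (fun x0:R => F1 x0) with F1. change (fun x0:R => F2 x0) with F2. ring.
Qed.

Lemma py F1 F2 F3 : smooth F1 -> smooth F2 -> smooth F3 -> forall x y,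
  partial_y (Vpot F1 F2 F3) x y = Derive F1 (y + sqrt 3 * x) + Derive F2 (y - sqrt 3 * x) - 2 * Derive F3 (-2*y).
Proof.
intros h1 h2 h3 x y. unfold partial_y, Vpot.
apply is_derive_unique. auto_derive.
- repeat split; apply sm1; auto.
- unfold Rminus. change (fun x0:R => F1 x0) with F1. change (fun x0:R => F2 x0) with F2. change (fun x0:R => F3 x0) with F3. ring.
Qed.

Theorem mainTheorem2 (F1 F2 F3 : R -> R)
  (h1 : smooth F1) (h2 : smooth F2) (h3 : smooth F3)
  (hcond : forall x y : R,
     let w1 := y + sqrt 3 * x in
     let w2 := y - sqrt 3 * x in
     let w3 := -2 * y in
     Derive F1 w1 * (F2 w2 - F3 w3) + Derive F2 w2 * (F3 w3 - F1 w1)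
       + Derive F3 w3 * (F1 w1 - F2 w2) = 0) :
  first_integral (Vpot F1 F2 F3) (fun _ x y xd yd => Jint F1 F2 F3 x y xd yd).
Proof.
intros a b x y hs t ht.
destruct (hs t ht) as (ex & ey & exx & eyy & Hx & Hy).
rewrite px in Hx by auto. rewrite py in Hy by auto.
unfold Jint.
match goal with |- is_derive ?f ?t 0 => assert (H : exists l : R, is_derive f t l /\ l = 0) end.
{ eexists; split.
  - auto_derive.
    + repeat split; auto; apply sm1; auto.
    + reflexivity.
  - change (fun x0:R => F1 x0) with F1. change (fun x0:R => F2 x0) with F2. change (fun x0:R => F3 x0) with F3.
    change (fun x0:R => x x0) with x. change (fun x0:R => y x0) with y.
    change (fun x0:R => Derive x x0) with (Derive x). change (fun x0:R => Derive y x0) with (Derive y).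
    rewrite Hx, Hy. specialize (hcond (x t) (y t)). simpl in hcond. unfold Rminus in *.
    assert (Hs : sqrt 3 * sqrt 3 = 3) by (apply sqrt_sqrt; lra).
    generalize dependent (sqrt 3). intros s hcond Hx Hy Hs.
    set (a1 := Derive F1 _) in *. set (a2 := Derive F2 _) in *. set (a3 := Derive F3 _) in *.
    set (A1 := F1 _) in *. set (A2 := F2 _) in *. set (A3 := F3 _) in *.
    set (u := Derive x t). set (v := Derive y t).
    transitivity (-6*s*(a1 * (A2 + - A3) + a2 * (A3 + - A1) + a3 * (A1 + - A2)) - 3*(s*s-3)*(a1+a2)*u*v).
    + ring.
    + rewrite hcond, Hs. ring. }
destruct H as [l [H1 H2]]; subst; exact H1.
Qed.
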